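(* Let $\Lambda$ be a row-finite $k$-graph with no sources, and let $\mu,\nu\in\Lambda$ with $s(\mu)=s(\nu)$. Then $\mu\sim\nu$ if and only if $\mathrm{MCE}(\mu\tau,\nu\tau)\ne\emptyset$ for every $\tau\in s(\mu)\Lambda$.
   Context: $k$-graph notation: countable category $\Lambda$, degree functor $d:\Lambda\to\mathbb N^k$ with unique factorisation, $\Lambda^n=d^{-1}(n)$, vertices $\Lambda^0$, range/source $r,s$, $v\Lambda^n=\{\lambda\in\Lambda^n:r(\lambda)=v\}$. Row-finite: every $v\Lambda^n$ is finite; no sources: every $v\Lambda^n$ is nonempty. $\mathrm{MCE}(\mu,\nu)=\{\lambda\in\Lambda^{d(\mu)\vee d(\nu)}:\lambda=\mu\alpha=\nu\beta\text{ for some }\alpha,\beta\}$. A filter is a nonempty $S\subseteq\Lambda$ with (F1) $\lambda\Lambda\cap S\ne\emptyset\Rightarrow\lambda\in S$ and (F2) $\mu,\nu\in S\Rightarrow\mathrm{MCE}(\mu,\nu)\cap S\ne\emptyset$; $r(S)$ denotes the unique vertex in $S$. An ultrafilter is a filter with $S\cap\Lambda^n\ne\emptyset$ for all $n\in\mathbb N^k$. For an ultrafilter $S$ and $\mu$ with $s(\mu)=r(S)$, $\ell_\mu(S)=\{\eta\in\Lambda:\eta\Lambda\cap\mu S\ne\emptyset\}$ (again an ultrafilter). For $\mu,\nu$ with $s(\mu)=s(\nu)$, $\mu\sim\nu$ means $\ell_\mu(S)=\ell_\nu(S)$ for every ultrafilter $S$ with $r(S)=s(\mu)$. *)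

(* Defs.v *)
From Stdlib Require Lists.List.
From mathcomp Require Import all_boot.
Set Implicit Arguments. Unset Strict Implicit. Unset Printing Implicit Defensive.

Definition NN (k : nat) := {ffun 'I_k -> nat}.
Definition NNadd k (m n : NN k) : NN k := [ffun i => m i + n i].
Definition NNjoin k (m n : NN k) : NN k := [ffun i => maxn (m i) (n i)].
Definition NN0 k : NN k := [ffun _ => 0].

(* Composition [kcomp] is total as a
   function but only meaningful (and only constrained) on composable pairs,
   i.e. when [s mu = r nu]; [kcomp mu nu] is the composite "mu nu". *)
Record kgraph (k : nat) := KGraph {
  Obj : Type;
  Mor : Type;
  rng : Mor -> Obj;
  src : Mor -> Obj;
  idm : Obj -> Mor;
  kcomp : Mor -> Mor -> Mor;
  deg : Mor -> NN k;
  mor_countable : exists f : Mor -> nat, injective f;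
  rng_id : forall v, rng (idm v) = v;
  src_id : forall v, src (idm v) = v;
  rng_comp : forall m n, src m = rng n -> rng (kcomp m n) = rng m;
  src_comp : forall m n, src m = rng n -> src (kcomp m n) = src n;
  comp_id_l : forall m, kcomp (idm (rng m)) m = m;
  comp_id_r : forall m, kcomp m (idm (src m)) = m;
  comp_assoc : forall a b c, src a = rng b -> src b = rng c ->
      kcomp (kcomp a b) c = kcomp a (kcomp b c);
  deg_id : forall v, deg (idm v) = NN0 k;
  deg_comp : forall m n, src m = rng n -> deg (kcomp m n) = NNadd (deg m) (deg n);
  unique_fact : forall l (m n : NN k), deg l = NNadd m n ->
      exists! p : Mor * Mor, [/\ deg p.1 = m, deg p.2 = n,
                                 src p.1 = rng p.2 & l = kcomp p.1 p.2]
}.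

Section KG.
Variables (k : nat) (L : kgraph k).
Local Notation Mor := (Mor L).
Local Notation r := (@rng k L).
Local Notation s := (@src k L).
Local Notation d := (@deg k L).
Local Notation kcomp := (@kcomp k L).

Definition row_finite : Prop :=
  forall (v : Obj L) (n : NN k), exists l : list Mor,
    forall lam, r lam = v -> d lam = n -> Stdlib.Lists.List.In lam l.

Definition no_sources : Prop :=
  forall (v : Obj L) (n : NN k), exists lam, r lam = v /\ d lam = n.

Definition MCE (mu nu : Mor) (lam : Mor) : Prop :=
  d lam = NNjoin (d mu) (d nu) /\
  exists alpha beta, [/\ s mu = r alpha, lam = kcomp mu alpha,
                         s nu = r beta & lam = kcomp nu beta].

Definition is_filter (S : Mor -> Prop) : Prop :=
  [/\ exists lam, S lam,
      (forall lam, (exists alpha, s lam = r alpha /\ S (kcomp lam alpha)) -> S lam)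
    & (forall mu nu, S mu -> S nu -> exists lam, MCE mu nu lam /\ S lam)].

Definition is_ultrafilter (S : Mor -> Prop) : Prop :=
  is_filter S /\ forall n : NN k, exists lam, S lam /\ d lam = n.

(* r(S) = v : the (unique) vertex of the filter S is v *)
Definition range_filter (S : Mor -> Prop) (v : Obj L) : Prop := S (idm v).

Definition ell (mu : Mor) (S : Mor -> Prop) (eta : Mor) : Prop :=
  exists alpha x, [/\ s eta = r alpha, S x, s mu = r x &
                      kcomp eta alpha = kcomp mu x].

Definition kequiv (mu nu : Mor) : Prop :=
  forall S, is_ultrafilter S -> range_filter S (s mu) ->
    forall eta, ell mu S eta <-> ell nu S eta.

End KG.

(* Main.v *)
Require Import Defs.
From mathcomp Require Import all_boot.
From mathcomp Require Import zify.
From Stdlib Require Import ClassicalEpsilon.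
Set Implicit Arguments. Unset Strict Implicit. Unset Printing Implicit Defensive.

Section Aux.
Variables (k : nat) (L : kgraph k).
Local Notation r := (@rng k L).
Local Notation s := (@src k L).
Local Notation d := (@deg k L).
Local Notation kc := (@kcomp k L).

Definition prefix (a c : Mor L) := exists p, s a = r p /\ c = kc a p.
Definition dle (m n : NN k) := forall i, m i <= n i.

Lemma prefix_refl a : prefix a a.
Proof. exists (idm (s a)). by rewrite rng_id comp_id_r. Qed.

Lemma prefix_trans a b c : prefix a b -> prefix b c -> prefix a c.
Proof.
move=> [p [hp ->]] [q [hq ->]].
rewrite src_comp // in hq.
exists (kc p q); split; first by rewrite rng_comp.
by rewrite comp_assoc.
Qed.

Lemma prefix_rng a c : prefix a c -> r c = r a.
Proof. by move=> [p [hp ->]]; rewrite rng_comp. Qed.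

Lemma prefix_comp mu x y : s mu = r x -> prefix x y -> prefix (kc mu x) (kc mu y).
Proof.
move=> h [p [hp ->]]. exists p; split; first by rewrite src_comp.
by rewrite comp_assoc.
Qed.

Lemma prefix_deg a c : prefix a c -> dle (d a) (d c).
Proof. by move=> [p [hp ->]] i; rewrite deg_comp // ffunE leq_addr. Qed.

Lemma factor c n : dle n (d c) -> exists a, prefix a c /\ d a = n.
Proof.
move=> hn.
have e : d c = NNadd n [ffun i => d c i - n i].
  by apply/ffunP => i; rewrite !ffunE subnKC.
have [[a b] [[/= h1 h2 h3 h4] _]] := unique_fact e.
by exists a; split => //; exists b.
Qed.

Lemma prefix_le a b c : prefix a c -> prefix b c -> dle (d a) (d b) -> prefix a b.
Proof.
move=> [p [hp ec]] [q [hq ec']] hab.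
have [b1 [[b2 [h12 eb]] db1]] := factor hab.
have hs2 : s b2 = r q by rewrite -hq eb src_comp.
have e : d c = NNadd (d a) (d p) by rewrite ec deg_comp.
have [[x y] [_ uq]] := unique_fact e.
have hdc : d c = NNadd (d b1) (d (kc b2 q)).
  by rewrite ec' eb comp_assoc // deg_comp // rng_comp.
have u1 : (x, y) = (a, p) by apply: uq; split.
have u2 : (x, y) = (b1, kc b2 q).
  apply: uq; split => //=.
  - apply/ffunP => i.
    have := congr1 (fun f : NN k => f i) e.
    rewrite hdc db1 !ffunE => /addnI ->. done.
  - by rewrite rng_comp.
  - by rewrite ec' eb comp_assoc.
rewrite u1 in u2; case: u2 => -> _.
by exists b2.
Qed.

Lemma mce_common a b c : prefix a c -> prefix b c ->
  exists lam, MCE a b lam /\ prefix lam c.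
Proof.
move=> pa pb.
have hj : dle (NNjoin (d a) (d b)) (d c).
  by move=> i; rewrite ffunE geq_max (prefix_deg pa) (prefix_deg pb).
have [lam [hl dl]] := factor hj.
have [al [h1 h2]] : prefix a lam.
  by apply: (prefix_le pa hl) => i; rewrite dl ffunE leq_maxl.
have [be [h3 h4]] : prefix b lam.
  by apply: (prefix_le pb hl) => i; rewrite dl ffunE leq_maxr.
exists lam; split => //; split => //.
by exists al, be.
Qed.

Lemma MCE_sym (a b l : Mor L) : MCE a b l -> MCE b a l.
Proof.
move=> [dl [al [be [h1 h2 h3 h4]]]]; split.
  by rewrite dl; apply/ffunP => i; rewrite !ffunE maxnC.
by exists be, al.
Qed.

Lemma dir1 mu nu : s mu = s nu ->
  (forall tau, r tau = s mu -> exists lam, MCE (kc mu tau) (kc nu tau) lam) ->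
  forall S, is_ultrafilter S -> range_filter S (s mu) ->
  forall eta, ell mu S eta -> ell nu S eta.
Proof.
move=> hs H S [[_ F1 F2] U] hr eta [al [x [h1 Sx h2 e]]].
have [z [Sz dz]] := U (NNadd (d x) (d mu)).
have [y [[dy [c [c' [hc ey hc' ey']]]] Sy]] := F2 _ _ Sx Sz.
have pxy : prefix x y by exists c.
have ry : r y = s mu by rewrite (prefix_rng pxy).
have [lam [_ [a [b [ha el hb el']]]]] := H y ry.
have pe : prefix eta (kc mu x) by exists al; split => //; rewrite e.
have p1 : prefix eta lam.
  apply: (prefix_trans pe).
  apply: (prefix_trans (b:=kc mu y)); first exact: prefix_comp.
  by exists a.
have p2 : prefix (kc nu y) lam by exists b.
have hny : s nu = r y by rewrite -hs ry.
have hle : dle (d eta) (d (kc nu y)).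
  move=> i. have := prefix_deg pe i. rewrite deg_comp // ffunE => le1.
  rewrite deg_comp // ffunE. apply: (leq_trans le1).
  rewrite dy dz !ffunE. lia.
have [q [hq eq]] := prefix_le p1 p2 hle.
by exists q, y; split => //; rewrite eq.
Qed.

Lemma dir2 mu nu : no_sources L -> s mu = s nu -> kequiv mu nu ->
  forall tau, r tau = s mu -> exists lam, MCE (kc mu tau) (kc nu tau) lam.
Proof.
move=> ns hs heq tau htau.
pose one : NN k := [ffun _ => 1].
pose e v := proj1_sig (constructive_indefinite_description _ (ns v one)).
have he v : r (e v) = v /\ d (e v) = one :=
  proj2_sig (constructive_indefinite_description _ (ns v one)).
pose f x := kc x (e (s x)).
pose t j := iter j f tau.
have tS j : t j.+1 = kc (t j) (e (s (t j))) by [].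
have pt j : prefix (t j) (t j.+1).
  by exists (e (s (t j))); split; [rewrite (he _).1 | ].
have ptm i m : prefix (t i) (t (i + m)).
  elim: m => [|m IH]; first by rewrite addn0; apply: prefix_refl.
  by rewrite addnS; apply: (prefix_trans IH).
have ptle i j : i <= j -> prefix (t i) (t j).
  by move=> hij; rewrite -(subnKC hij).
have dt j i : d (t j) i = d tau i + j.
  elim: j => [|j IH]; first by rewrite addn0.
  rewrite tS deg_comp ?(he _).1 // ffunE IH (he _).2 ffunE; lia.
pose S lam := exists j, prefix lam (t j).
have US : is_ultrafilter S.
  split; [split|].
  - by exists tau, 0; apply: prefix_refl.
  - move=> lam [al [h [j hj]]]. exists j. apply: prefix_trans hj. by exists al.
  - move=> a b [i hi] [j hj].
    have hi' := prefix_trans hi (ptle _ _ (leq_maxl i j)).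
    have hj' := prefix_trans hj (ptle _ _ (leq_maxr i j)).
    have [lam [hm hl]] := mce_common hi' hj'.
    by exists lam; split => //; exists (maxn i j).
  - move=> n.
    have hn : dle n (d (t (\sum_(i < k) n i))).
      move=> i; rewrite dt; apply: leq_trans (leq_addl _ _).
      by rewrite (bigD1 i) //= leq_addr.
    have [lam [hl dl]] := factor hn.
    by exists lam; split => //; exists (\sum_(i < k) n i).
have hr : range_filter S (s mu).
  exists 0; exists tau; split; first by rewrite src_id.
  by rewrite /= -htau comp_id_l.
have el : ell mu S (kc mu tau).
  exists (idm (s (kc mu tau))), tau; split.
  - by rewrite rng_id.
  - by exists 0; apply: prefix_refl.
  - by rewrite htau.
  - by rewrite comp_id_r.
have [al [y [h1 [j hj] h2 e']]] := (heq S US hr (kc mu tau)).1 el.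
have ptj : prefix tau (t j) by apply: (ptle 0).
have p1 : prefix (kc mu tau) (kc nu (t j)).
  apply: (prefix_trans (b := kc nu y)).
    by exists al; split => //; rewrite e'.
  exact: prefix_comp.
have p2 : prefix (kc nu tau) (kc nu (t j)).
  by apply: prefix_comp => //; rewrite -hs htau.
have [lam [hm _]] := mce_common p1 p2.
by exists lam.
Qed.

End Aux.

Theorem mainTheorem20 (k : nat) (L : kgraph k) (mu nu : Mor L) :
  row_finite L -> no_sources L -> src mu = src nu ->
  (kequiv mu nu <->
   forall tau : Mor L, rng tau = src mu ->
     exists lam, MCE (kcomp mu tau) (kcomp nu tau) lam).
Proof.
move=> _ ns hs; split; first exact: dir2.
move=> H S US hr eta; split; first exact: dir1.
apply: dir1 => //; last by rewrite -hs.
by move=> tau ht; have [lam hl] := H tau (etrans ht (esym hs)); exists lam; apply: MCE_sym.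
Qed.
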